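(* Let $T_1,T_2$ be $2\times2$ matrices with entries in $\{0,1\}$, neither having a zero row, and let $\alpha_i=T_1^{(i)}\otimes T_2^{(i)}$ for $i=1,2$. If $\alpha_1>\alpha_2$ or $\alpha_2>\alpha_1$, then the associated recurrence system is of dominating type.
   Context: $T_k^{(i)}$ is the $i$-th row of $T_k$ and $(v_1,v_2)\otimes(w_1,w_2)=(v_1w_1,v_1w_2,v_2w_1,v_2w_2)$. For vectors, $v\ge w$ means $v_i\ge w_i$ for every coordinate, and $v>w$ means $v\ge w$ and $v\ne w$. The recurrence system: $\gamma^{[s_j]}_{i,0}=1$ and for $n\ge1$ $$\gamma^{[s_1]}_{i,n}=\sum_{j,k=1}^2T_1(i,j)T_2(i,k)\,\gamma^{[s_1]}_{j,n-1}\gamma^{[s_2]}_{k,n-1},\qquad \gamma^{[s_2]}_{i,n}=\sum_{j=1}^2T_1(i,j)\,\gamma^{[s_1]}_{j,n-1}.$$ The items of $\gamma^{[s_1]}_{i,n}$ are the products $\gamma^{[s_1]}_{j,n-1}\gamma^{[s_2]}_{k,n-1}$ indexed by the pairs $(j,k)$ with $T_1(i,j)T_2(i,k)=1$; the items of $\gamma^{[s_2]}_{i,n}$ are the terms $\gamma^{[s_1]}_{j,n-1}$ indexed by the $j$ with $T_1(i,j)=1$. Thus $\gamma^{[s_j]}_{i,n}=\sum_{l}f^{ij}_{l,n-1}$ where $f^{ij}_{l,n-1}$ is the $l$-th item. $\gamma^{[s_j]}_{i,n}$ has a dominate item if there is an index $r$ such that $f^{ij}_{r,n}\ge f^{ij}_{l,n}$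 for every index $l\ne r$ and every $n\ge1$. The system is of dominating type if each of $\gamma^{[s_1]}_{1,n},\gamma^{[s_1]}_{2,n},\gamma^{[s_2]}_{1,n},\gamma^{[s_2]}_{2,n}$ has a dominate item. *)

(* Defs.v *)
From mathcomp Require Import all_boot all_order all_algebra.
Set Implicit Arguments. Unset Strict Implicit. Unset Printing Implicit Defensive.

(* The recurrence system: gamma T1 T2 n = (gamma^{[s1]}_{.,n}, gamma^{[s2]}_{.,n}) *)
Fixpoint gamma (T1 T2 : 'M[nat]_2) (n : nat) : ('I_2 -> nat) * ('I_2 -> nat) :=
  match n with
  | 0 => (fun _ => 1, fun _ => 1)
  | n'.+1 =>
      let g := gamma T1 T2 n' in
      (fun i => \sum_(j < 2) \sum_(k < 2) T1 i j * T2 i k * (g.1 j * g.2 k),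
       fun i => \sum_(j < 2) T1 i j * g.1 j)
  end.

Definition gamma1 T1 T2 (i : 'I_2) n := (gamma T1 T2 n).1 i.
Definition gamma2 T1 T2 (i : 'I_2) n := (gamma T1 T2 n).2 i.

(* Kronecker product of row vectors (v1,v2) (x) (w1,w2) = (v1w1,v1w2,v2w1,v2w2) *)
Definition kron2 (v w : 'rV[nat]_2) : 'rV[nat]_4 :=
  \row_(k < 4) (v ord0 (inord (k %/ 2)) * w ord0 (inord (k %% 2)))%N.

Definition alpha (T1 T2 : 'M[nat]_2) (i : 'I_2) : 'rV[nat]_4 :=
  kron2 (row i T1) (row i T2).

Definition vge (v w : 'rV[nat]_4) : Prop := forall k, w ord0 k <= v ord0 k.
Definition vgt (v w : 'rV[nat]_4) : Prop := vge v w /\ v != w.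

(* items of gamma^{[s1]}_{i,n+1}: indexed by (j,k) with T1(i,j) T2(i,k) = 1,
   value gamma^{[s1]}_{j,n} gamma^{[s2]}_{k,n} *)
Definition has_dominate_item1 (T1 T2 : 'M[nat]_2) (i : 'I_2) : Prop :=
  exists r : 'I_2 * 'I_2, T1 i r.1 * T2 i r.2 = 1 /\
    forall l : 'I_2 * 'I_2, T1 i l.1 * T2 i l.2 = 1 ->
      forall n, gamma1 T1 T2 l.1 n * gamma2 T1 T2 l.2 n
                <= gamma1 T1 T2 r.1 n * gamma2 T1 T2 r.2 n.

(* items of gamma^{[s2]}_{i,n+1}: indexed by j with T1(i,j) = 1,
   value gamma^{[s1]}_{j,n} *)
Definition has_dominate_item2 (T1 T2 : 'M[nat]_2) (i : 'I_2) : Prop :=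
  exists r : 'I_2, T1 i r = 1 /\
    forall l : 'I_2, T1 i l = 1 ->
      forall n, gamma1 T1 T2 l n <= gamma1 T1 T2 r n.

Definition dominating_type (T1 T2 : 'M[nat]_2) : Prop :=
  forall i : 'I_2, has_dominate_item1 T1 T2 i /\ has_dominate_item2 T1 T2 i.

(* Main.v *)
Require Import Defs.
From mathcomp Require Import all_boot all_order all_algebra.
From mathcomp Require Import zify.

Lemma mono (T1 T2 : 'M[nat]_2) (a b : 'I_2) :
  (forall j, T1 b j <= T1 a j) -> (forall k, T2 b k <= T2 a k) ->
  forall n, gamma1 T1 T2 b n <= gamma1 T1 T2 a n /\ gamma2 T1 T2 b n <= gamma2 T1 T2 a n.
Proof.
move=> H1 H2 [|n]; first by [].
rewrite /gamma1 /gamma2 /=; split.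
- apply: leq_sum => j _; apply: leq_sum => k _.
  by apply: leq_mul => //; apply: leq_mul.
- by apply: leq_sum => j _; apply: leq_mul.
Qed.

Lemma two_cases (a b x : 'I_2) : a != b -> x = a \/ x = b.
Proof.
move: a b x => [[|[|a]] Ha] [[|[|b]] Hb] [[|[|x]] Hx] //= _;
  try (left; exact: val_inj); try (right; exact: val_inj).
Qed.

Lemma dom (T1 T2 : 'M[nat]_2) (a b : 'I_2)
  (H01 : forall i j, T1 i j <= 1) (H02 : forall i j, T2 i j <= 1)
  (Hr1 : forall i, exists j, T1 i j != 0) (Hr2 : forall i, exists j, T2 i j != 0) :
  a != b ->
  (forall j, T1 b j <= T1 a j) -> (forall k, T2 b k <= T2 a k) ->
  dominating_type T1 T2.
Proof.
move=> ab H1 H2.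
have M := @mono T1 T2 a b H1 H2.
have pick : forall (T : 'M[nat]_2), (forall i j, T i j <= 1) ->
   (forall i, exists j, T i j != 0) -> forall i, exists r,
   T i r = 1 /\ (forall l, T i l = 1 -> l = r \/ r = a).
  move=> T H0 Hr i.
  case: (boolP (T i a == 1)) => [/eqP E|E].
    by exists a; split => //; right.
  exists b; split.
    case: (Hr i) => j; case: (@two_cases a b j ab) => -> Hj.
      by move: E Hj; have := H0 i a; lia.
    by move: Hj; have := H0 i b; lia.
  move=> l Hl; left; case: (@two_cases a b l ab) => El //.
  by move: E; rewrite -El Hl.
move=> i; split.
- case: (pick T1 H01 Hr1 i) => r1 [E1 P1].
  case: (pick T2 H02 Hr2 i) => r2 [E2 P2].
  exists (r1, r2); split; first by rewrite /= E1 E2.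
  move=> [l1 l2] /= Hl n.
  have Hl1 : T1 i l1 = 1 by have := H01 i l1; have := H02 i l2; nia.
  have Hl2 : T2 i l2 = 1 by have := H01 i l1; have := H02 i l2; nia.
  apply: leq_mul.
    case: (P1 _ Hl1) => [->|->] //.
    by case: (@two_cases a b l1 ab) => -> //; case: (M n).
  case: (P2 _ Hl2) => [->|->] //.
  by case: (@two_cases a b l2 ab) => -> //; case: (M n).
- case: (pick T1 H01 Hr1 i) => r1 [E1 P1].
  exists r1; split => // l Hl n.
  case: (P1 _ Hl) => [->|->] //.
  by case: (@two_cases a b l ab) => -> //; case: (M n).
Qed.

Lemma extract (T1 T2 : 'M[nat]_2) (a b : 'I_2)
  (H01 : forall i j, T1 i j <= 1) (H02 : forall i j, T2 i j <= 1)
  (Hr1 : forall i, exists j, T1 i j != 0) (Hr2 : forall i, exists j, T2 i j != 0) :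
  vge (alpha T1 T2 a) (alpha T1 T2 b) ->
  (forall j, T1 b j <= T1 a j) /\ (forall k, T2 b k <= T2 a k).
Proof.
move=> H.
have E : forall j k : 'I_2, T1 b j * T2 b k <= T1 a j * T2 a k.
  move=> j k.
  have lt : 2 * j + k < 4 by have := ltn_ord j; have := ltn_ord k; lia.
  have := H (Ordinal lt); rewrite /alpha /kron2 !mxE /=.
  have -> : (inord ((2 * j + k) %/ 2) : 'I_2) = j.
    apply: val_inj; rewrite /= inordK; have := ltn_ord j; have := ltn_ord k; lia.
  have -> : (inord ((2 * j + k) %% 2) : 'I_2) = k.
    apply: val_inj; rewrite /= inordK; have := ltn_ord j; have := ltn_ord k; try lia.
  by [].
split.
- move=> j; case: (Hr2 b) => k Hk; have := E j k; have := H01 a j; have := H01 b j;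
  have := H02 a k; have := H02 b k; move: Hk; nia.
- move=> k; case: (Hr1 b) => j Hj; have := E j k; have := H01 a j; have := H01 b j;
  have := H02 a k; have := H02 b k; move: Hj; nia.
Qed.

Theorem proposition2 (T1 T2 : 'M[nat]_2)
  (H01 : forall i j, T1 i j <= 1) (H02 : forall i j, T2 i j <= 1)
  (Hr1 : forall i, exists j, T1 i j != 0) (Hr2 : forall i, exists j, T2 i j != 0) :
  vgt (alpha T1 T2 ord0) (alpha T1 T2 ord_max) \/ vgt (alpha T1 T2 ord_max) (alpha T1 T2 ord0) ->
  dominating_type T1 T2.
Proof.
case=> [[H _]|[H _]].
- case: (@extract T1 T2 _ _ H01 H02 Hr1 Hr2 H) => A B.
  by apply: (@dom T1 T2 _ _ H01 H02 Hr1 Hr2 _ A B).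
- case: (@extract T1 T2 _ _ H01 H02 Hr1 Hr2 H) => A B.
  by apply: (@dom T1 T2 _ _ H01 H02 Hr1 Hr2 _ A B).
Qed.
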